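(* Let $B_m\in\mathbb{C}^{m\times m}$, let $\lambda_1,\ldots,\lambda_{m+1}\in\mathbb{C}$, let $P(\lambda)=\prod_{i=1}^{m+1}(\lambda-\lambda_i)$ and $\delta=\sum_{i=1}^{m+1}\lambda_i-\operatorname{tr}(B_m)$. For $b,c\in\mathbb{C}^m$ write $B_{m+1}(b,c)=\begin{pmatrix}B_m&c\\ b^{T}&\delta\end{pmatrix}$. Suppose $b,c\in\mathbb{C}^m$ satisfy $\det(\lambda I_{m+1}-B_{m+1}(b,c))=P(\lambda)$. Then: (i) $c$ is the unique $c'\in\mathbb{C}^m$ with $\det(\lambda I_{m+1}-B_{m+1}(b,c'))=P(\lambda)$ if and only if the pair $(B_m, b^T)$ is observable, i.e. $\operatorname{rank}(b,\,B_m^{T}b,\,(B_m^{T})^2b,\ldots)=m$; (ii) $b$ is the unique $b'\in\mathbb{C}^m$ with $\det(\lambda I_{m+1}-B_{m+1}(b',c))=P(\lambda)$ if and only if the pair $(B_m,c)$ is controllable, i.e. $\operatorname{rank}(c,\,B_mc,\,B_m^2c,\ldots)=m$. *)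

(* Defs.v *)
From mathcomp Require Import all_boot all_order all_algebra.
From mathcomp Require Import complex.
From mathcomp Require Import Rstruct.
Set Implicit Arguments. Unset Strict Implicit. Unset Printing Implicit Defensive.
Import GRing.Theory.
Local Open Scope ring_scope.

Notation C := (complex Rdefinitions.R).

Definition krylov (F : fieldType) (m : nat) (A : 'M[F]_m) (v : 'cV[F]_m)
  : 'M[F]_m := \matrix_(i < m, j < m) ((A ^+ j) *m v) i 0.

Definition observable (F : fieldType) (m : nat) (A : 'M[F]_m) (b : 'cV[F]_m) : Prop :=
  \rank (krylov A^T b) = m.

Definition controllable (F : fieldType) (m : nat) (A : 'M[F]_m) (c : 'cV[F]_m) : Prop :=
  \rank (krylov A c) = m.

Definition bordered (F : fieldType) (m : nat) (B : 'M[F]_m) (delta : F)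
  (b c : 'cV[F]_m) : 'M[F]_(m + 1) :=
  block_mx B c b^T delta%:M.

(* Main.v *)
Require Import Defs.
From mathcomp Require Import all_boot all_order all_algebra.
From mathcomp Require Import complex.
From mathcomp Require Import Rstruct.
Set Implicit Arguments. Unset Strict Implicit. Unset Printing Implicit Defensive.
Import GRing.Theory.
Local Open Scope ring_scope.

Lemma det_border (R : idomainType) m (A : 'M[R]_m) (u : 'cV_m) (v : 'rV_m) (d : R) :
  \det A != 0 ->
  \det (block_mx A u v d%:M) = d * \det A - (v *m \adj A *m u) 0 0.
Proof.
move=> nzA.
pose N := block_mx 1%:M (- (\adj A *m u)) 0 (\det A)%:M : 'M[R]_(m + 1).
have detN : \det N = \det A by rewrite det_ublock det1 mul1r det_scalar1.
have prodE : block_mx A u v d%:M *m N =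
    block_mx A 0 v ((d * \det A - (v *m \adj A *m u) 0 0)%:M).
  rewrite mulmx_block !mulmx1 !mulmx0 !addr0 mulmxN mulmxA mul_mx_adj.
  rewrite mul_scalar_mx mul_mx_scalar addNr; congr block_mx.
  rewrite mulmxN mulmxA -scalar_mxM.
  have E : v *m \adj A *m u = ((v *m \adj A *m u) 0 0)%:M := mx11_scalar _.
  by rewrite {1}E -raddfN -raddfD addrC.
have := congr1 determinant prodE.
rewrite det_mulmx detN det_lblock det_scalar1 => /eqP.
by rewrite mulrC eq_sym (inj_eq (mulfI nzA)) => /eqP ->.
Qed.

Lemma pow_reduce (F : fieldType) m (B : 'M[F]_m) j :
  exists r : {poly F}, B ^+ j = \sum_(i < m) r`_i *: B ^+ i.
Proof.
case: m B => [|m'] B; first by exists 0; apply/matrixP => -[].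
set p := char_poly B.
have sp : size p = m'.+2 by rewrite size_char_poly.
have nzp : p != 0 by rewrite monic_neq0 ?char_poly_monic.
exists ('X^j %% p).
have sr : (size ('X^j %% p)%R <= m'.+1)%N.
  by have := ltn_modp ('X^j) p; rewrite nzp sp ltnS => ->.
have -> : B ^+ j = horner_mx B ('X^j) by rewrite rmorphXn /= horner_mx_X.
rewrite {1}(divp_eq ('X^j) p) rmorphD rmorphM /= Cayley_Hamilton mulr0 add0r.
have hr : 'X^j %% p = \poly_(i < m'.+1) ('X^j %% p)`_i.
  apply/polyP => i; rewrite coef_poly; case: ltnP => // hi.
  by rewrite nth_default // (leq_trans sr hi).
rewrite {1}hr poly_def rmorph_sum /=; apply: eq_bigr => i _.
rewrite linearZ /= rmorphXn /= horner_mx_X.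
by [].
Qed.

Section Main.
Variables (F : fieldType) (m : nat) (B : 'M[F]_m).

Definition beta (x y : 'cV[F]_m) : {poly F} :=
  (map_mx polyC x^T *m \adj (char_poly_mx B) *m map_mx polyC y) 0 0.

Lemma char_poly_bordered d x y :
  char_poly (bordered B d x y) = ('X - d%:P) * char_poly B - beta x y.
Proof.
rewrite /char_poly /bordered /char_poly_mx (scalar_mx_block m 1) map_block_mx.
rewrite opp_block_mx add_block_mx map_scalar_mx -raddfB /=.
rewrite det_border ?monic_neq0 ?char_poly_monic //.
by rewrite /beta !sub0r !mulNmx !mulmxN opprK.
Qed.

Definition coefmx k r s (M : 'M[{poly F}]_(r, s)) : 'M[F]_(r, s) :=
  \matrix_(i, j) (M i j)`_k.

Lemma coef_mapC_mul r s t (M : 'M[F]_(r, s)) (W : 'M[{poly F}]_(s, t)) k i j :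
  ((map_mx polyC M *m W) i j)`_k = (M *m coefmx k W) i j.
Proof.
rewrite !mxE coef_sum; apply: eq_bigr => l _.
by rewrite !mxE coefCM.
Qed.

Lemma beta_coef x y k :
  (beta x y)`_k = (x^T *m coefmx k (\adj (char_poly_mx B) *m map_mx polyC y)) 0 0.
Proof. by rewrite /beta -mulmxA coef_mapC_mul. Qed.

Variable y : 'cV[F]_m.
Let w := \adj (char_poly_mx B) *m map_mx polyC y.
Let wc k := coefmx k w.
Let p := char_poly B.

Lemma wc_rec_gen (W : 'cV[{poly F}]_m) k :
  char_poly_mx B *m W = p *: map_mx polyC y ->
  coefmx k W = B *m coefmx k.+1 W + p`_k.+1 *: y.
Proof.
rewrite /char_poly_mx mulmxBl mul_scalar_mx => E.
apply/matrixP => i j.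
move/matrixP/(_ i j): E => E.
have := congr1 (fun q : {poly F} => q`_k.+1) E => {E}.
rewrite 4!mxE coefD coefN coefXM /= coef_sum.
rewrite (eq_bigr (fun l => B i l * (W l j)`_k.+1)); last by move=> l _; rewrite mxE coefCM.
rewrite !mxE coefMC => E.
rewrite (eq_bigr (fun l => B i l * (W l j)`_k.+1)); last by move=> l _; rewrite mxE.
by rewrite -E addrC subrK.
Qed.

Lemma wc_rec k : wc k = B *m wc k.+1 + p`_k.+1 *: y.
Proof.
apply: wc_rec_gen.
by rewrite /w mulmxA mul_mx_adj mul_scalar_mx.
Qed.

Lemma wc_large : exists N, forall k, (N <= k)%N -> wc k = 0.
Proof.
exists (\max_(ij : 'I_m * 'I_1) size (w ij.1 ij.2)) => k hk.
apply/matrixP => i j; rewrite [LHS]mxE [RHS]mxE nth_default //.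
apply: leq_trans hk.
have H := (@leq_bigmax _ (fun ij : 'I_m * 'I_1 => size (w ij.1 ij.2)) (i, j)). exact H.
Qed.

Lemma p_size : size p = m.+1.
Proof. exact: size_char_poly. Qed.

Lemma p_high k : (m < k)%N -> p`_k = 0.
Proof. by move=> hk; rewrite nth_default // p_size. Qed.

Lemma p_lead : p`_m = 1.
Proof.
have := char_poly_monic B; rewrite monicE lead_coefE -/p p_size /=.
by move/eqP.
Qed.

Lemma wc_top k : (m <= k)%N -> wc k = 0.
Proof.
have [N hN] := wc_large.
suff H : forall s k, (m <= k)%N -> (N <= k + s)%N -> wc k = 0.
  by move=> hk; apply: (H N) => //; rewrite leq_addl.
elim => [|s IH] {}k hk hN'.
  by apply: hN; rewrite addn0 in hN'.
rewrite wc_rec IH ?(leq_trans hk) // ?addSnnS // p_high ?ltnS //.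
by rewrite mulmx0 scale0r addr0.
Qed.

Lemma wc_last : (0 < m)%N -> wc m.-1 = y.
Proof.
move=> hm; rewrite wc_rec prednK // wc_top // p_lead.
by rewrite mulmx0 add0r scale1r.
Qed.

Variable x : 'cV[F]_m.
Definition sf j (v : 'cV[F]_m) := (x^T *m B ^+ j *m v) 0 0.

Lemma sfB j v : sf j (B *m v) = sf j.+1 v.
Proof. by rewrite /sf exprSr mulmxA -mulmxE mulmxA. Qed.

Lemma sfDZ j u a v : sf j (u + a *: v) = sf j u + a * sf j v.
Proof. by rewrite /sf mulmxDr -scalemxAr !mxE. Qed.

Lemma sf0 j : sf j 0 = 0.
Proof. by rewrite /sf mulmx0 mxE. Qed.

Lemma sf_all : (forall j, (j < m)%N -> sf j y = 0) -> forall j, sf j y = 0.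
Proof.
move=> H j; have [r Er] := pow_reduce B j.
rewrite /sf Er mulmx_sumr mulmx_suml summxE big1 // => i _.
rewrite -scalemxAr -scalemxAl mxE; have := H i (ltn_ord i); rewrite /sf => ->; exact: mulr0.
Qed.

Lemma dirA : (forall j, (j < m)%N -> sf j y = 0) ->
  forall k, (x^T *m wc k) 0 0 = 0.
Proof.
move=> /sf_all H0 k.
have [N hN] := wc_large.
suff H : forall s k, (N <= k + s)%N -> forall j, sf j (wc k) = 0.
  by have := H N k (leq_addl _ _) 0; rewrite /sf expr0 mulmx1.
elim => [|s IH] {}k hk j.
  by rewrite hN ?sf0 // -(addn0 k).
rewrite wc_rec sfDZ sfB IH ?addSnnS // H0.
by rewrite mulr0 addr0.
Qed.

Lemma dirB : (forall k, (x^T *m wc k) 0 0 = 0) ->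
  forall j, (j < m)%N -> sf j y = 0.
Proof.
move=> H.
suff T : forall j, (j < m)%N -> forall k, (j <= k)%N -> sf j (wc k) = 0.
  move=> j hj; rewrite -wc_last ?(leq_ltn_trans _ hj) //.
  by apply: T => //; rewrite -ltnS prednK // (leq_ltn_trans _ hj).
elim => [|j IH] hj k hk.
  by rewrite /sf expr0 mulmx1 H.
case: k hk => [//|k] hk.
have hj' : (j < m)%N by apply: ltnW.
have E := IH hj' k hk.
have Ey : sf j y = 0.
  rewrite -wc_last ?(leq_ltn_trans _ hj') //; apply: IH => //.
  by rewrite -ltnS prednK // (leq_ltn_trans _ hj').
by move: E; rewrite wc_rec sfDZ sfB Ey mulr0 addr0.
Qed.

Lemma beta_eq0 : beta x y = 0 <-> (forall j, (j < m)%N -> sf j y = 0).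
Proof.
split => [H | H].
  by apply: dirB => k; have := beta_coef x y k; rewrite H coef0 => <-.
apply/polyP => k; rewrite coef0 beta_coef; exact: dirA H k.
Qed.

End Main.


Lemma betaDr (F : fieldType) m (B : 'M[F]_m) x y d :
  beta B x (y + d) = beta B x y + beta B x d.
Proof. by rewrite /beta map_mxD mulmxDr mxE. Qed.

Lemma trmxX (F : fieldType) m (B : 'M[F]_m) j : (B ^+ j)^T = B^T ^+ j.
Proof.
elim: j => [|j IH]; first by rewrite !expr0 trmx1.
by rewrite exprS -mulmxE trmx_mul IH mulmxE -exprSr.
Qed.

Lemma krylov_rank (F : fieldType) m (A : 'M[F]_m) (v : 'cV[F]_m) :
  (forall d : 'cV[F]_m, (forall j, (j < m)%N -> (d^T *m (A ^+ j *m v)) 0 0 = 0) -> d = 0)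
  <-> \rank (krylov A v) = m.
Proof.
have KE : forall d : 'cV[F]_m, forall j : 'I_m,
    (d^T *m krylov A v) 0 j = (d^T *m (A ^+ j *m v)) 0 0.
  by move=> d j; rewrite !mxE; apply: eq_bigr => i _; rewrite !mxE.
split => [H | H].
  apply/eqP; apply: inj_row_free => u hu.
  suff : u^T = 0 by move/(congr1 trmx); rewrite trmxK trmx0.
  by apply: H => j hj; rewrite -(KE u^T (Ordinal hj)) trmxK hu mxE.
move=> d hd.
have rf : row_free (krylov A v) by apply/eqP.
have : d^T *m krylov A v = 0.
  by apply/matrixP => i j; rewrite ord1 KE hd // mxE.
move/eqP; rewrite mulmx_free_eq0 // => /eqP.
by move/(congr1 trmx); rewrite trmxK trmx0.
Qed.

Lemma betaDl (F : fieldType) m (B : 'M[F]_m) x d y :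
  beta B (x + d) y = beta B x y + beta B d y.
Proof. by rewrite /beta linearD /= map_mxD !mulmxDl mxE. Qed.

Lemma sf_tr (F : fieldType) m (B : 'M[F]_m) x j d :
  sf B x j d = (d^T *m (B^T ^+ j *m x)) 0 0.
Proof.
transitivity ((x^T *m B ^+ j *m d)^T 0 0); first by rewrite mxE.
by rewrite !trmx_mul trmxK trmxX mulmxA.
Qed.

Lemma uniq_iff (F : fieldType) (V : zmodType) (f : V -> {poly F}) (g : V -> {poly F})
    (Phi P : {poly F}) (c : V) :
  (forall u v, g (u + v) = g u + g v) ->
  (forall v, f v = Phi - g v) -> f c = P ->
  (forall c', f c' = P -> c' = c) <-> (forall d, g d = 0 -> d = 0).
Proof.
move=> gD fE H0; split.
  move=> U d hd; have := U (c + d).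
  rewrite fE gD hd addr0 -fE => /(_ H0) /eqP.
  by rewrite -{2}[c]addr0 (inj_eq (addrI c)) => /eqP.
move=> U c' hc'.
have E : g c' = g c by move: hc'; rewrite fE -H0 fE => /addrI /oppr_inj.
have : g (c' - c) = 0.
  by apply/eqP; rewrite -(inj_eq (addrI (g c))) -gD addrC subrK E addr0.
by move/U/eqP; rewrite subr_eq0 => /eqP.
Qed.

Unset Implicit Arguments.

Theorem mainTheorem5 (m : nat) (Bm : 'M[C]_m) (lam : 'I_m.+1 -> C)
    (b c : 'cV[C]_m) :
  let P : {poly C} := \prod_(i < m.+1) ('X - (lam i)%:P) in
  let delta : C := \sum_(i < m.+1) lam i - \tr Bm in
  char_poly (bordered Bm delta b c) = P ->
  ((forall c' : 'cV[C]_m, char_poly (bordered Bm delta b c') = P -> c' = c)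
     <-> observable Bm b)
  /\
  ((forall b' : 'cV[C]_m, char_poly (bordered Bm delta b' c) = P -> b' = b)
     <-> controllable Bm c).
Proof.
move=> P delta H0.
have CB := char_poly_bordered Bm delta.
split.
  rewrite (uniq_iff (f := fun y => char_poly (bordered Bm delta b y))
             (g := beta Bm b) _ (fun v => CB b v) H0); last exact: betaDr.
  rewrite /observable -krylov_rank.
  split => U d hd; apply: U.
    by apply/beta_eq0 => j hj; rewrite sf_tr hd.
  by move=> j hj; rewrite -sf_tr; move/beta_eq0: hd; apply.
rewrite (uniq_iff (f := fun x => char_poly (bordered Bm delta x c))
           (g := fun x => beta Bm x c) _ (fun v => CB v c) H0); last first.
  by move=> u v; exact: betaDl.
rewrite /controllable -krylov_rank.
split => U d hd; apply: U.
  by apply/beta_eq0 => j hj; rewrite /sf -mulmxA hd.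
by move=> j hj; rewrite mulmxA; move/beta_eq0: hd; apply.
Qed.
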